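(* For all $j_1,j_2\in\tfrac12\mathbb{N}^+$: (i) $\widehat R^{(j_1+\frac12,j_2)}=\mathcal{F}^{(j_1+\frac12)}_{12}\widehat R^{(\frac12,j_2)}_{13}\widehat R^{(j_1,j_2)}_{23}\mathcal{E}^{(j_1+\frac12)}_{12}$; (ii) $\widehat R^{(j_1+\frac12,j_2)}=\mathcal{F}^{(j_1+\frac12)}_{12}\widehat R^{(j_1,j_2)}_{23}\widehat R^{(\frac12,j_2)}_{13}\mathcal{E}^{(j_1+\frac12)}_{12}$; where in (i),(ii) the three tensor factors have sizes $2,\,2j_1+1,\,2j_2+1$; (iii) $\widehat R^{(j_1,j_2+\frac12)}=\mathcal{F}^{(j_2+\frac12)}_{23}\widehat R^{(j_1,\frac12)}_{12}\widehat R^{(j_1,j_2)}_{13}\mathcal{E}^{(j_2+\frac12)}_{23}$; (iv) $\widehat R^{(j_1,j_2+\frac12)}=\mathcal{F}^{(j_2+\frac12)}_{23}\widehat R^{(j_1,j_2)}_{13}\widehat R^{(j_1,\frac12)}_{12}\mathcal{E}^{(j_2+\frac12)}_{23}$; where in (iii),(iv) the three tensor factors have sizes $2j_1+1,\,2,\,2j_2+1$.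
   Context: $\mathbb{F}$ is a field of characteristic zero in which every element has a square root; $q\in\mathbb{F}$ is nonzero and not a root of unity, with a fixed square root $q^{1/2}$ ($q^{k/2}:=(q^{1/2})^k$); other $(\cdot)^{1/2}$ are fixed square roots in $\mathbb{F}$. $[n]_q=\frac{q^n-q^{-n}}{q-q^{-1}}$. $\tfrac12\mathbb{N}^+=\{\tfrac12,1,\tfrac32,\dots\}$. $\otimes$ is the Kronecker product, $I_n$ the identity. Leg notation: for factors $\mathbb{F}^{n_1}\otimes\mathbb{F}^{n_2}\otimes\mathbb{F}^{n_3}$, $X_{12}=X\otimes I_{n_3}$, $X_{23}=I_{n_1}\otimes X$, $X_{13}=P(X\otimes I_{n_2})P$ with $P$ the flip of factors 2,3; for non-square $Y$, $Y_{12}=Y\otimes I_{n_3}$, $Y_{23}=I_{n_1}\otimes Y$. For $j\in\tfrac12\mathbb{N}^+$, $\mathcal{E}^{(j+\frac12)}$ is the $(4j+2)\times(2j+2)$ matrix with only nonzero entries $\mathcal{E}_{(a,a)}=\big(\frac{[2j+2-a]_q}{[2j+1]_q}\big)^{1/2}$, $\mathcal{E}_{(a+2j+1,a+1)}=\big(\frac{[a]_q}{[2j+1]_q}\big)^{1/2}$ ($1\le a\le 2j+1$), and $\mathcal{F}^{(j+\frac12)}$ is the $(2j+2)\times(4j+2)$ matrix with only nonzero entries $\mathcal{F}_{(a,a)}=\frac{([2j+2-a]_q[2j+1]_q)^{1/2}}{[2j+2-a]_q+[a-1]_q}$, $\mathcal{F}_{(a+1,a+2j+1)}=\frac{([a]_q[2j+1]_q)^{1/2}}{[2j+1-a]_q+[a]_q}$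 ($1\le a\le 2j+1$); the $4j+2$ side is $\mathbb{F}^2\otimes\mathbb{F}^{2j+1}$. For $j_1,j_2\in\tfrac12\mathbb{N}^+$, $\widehat R^{(j_1,j_2)}=q^{2\,\mathrm{diag}(j_1,j_1-1,\dots,-j_1)\otimes\mathrm{diag}(j_2,j_2-1,\dots,-j_2)}$, the $(2j_1+1)(2j_2+1)$-square diagonal matrix with entries $q^{2\alpha\beta}$. *)

(* Defs.v *)
(* Kronecker product: [tensmx] ( A *t B ) from
   mathcomp-real-closed's mxtens, with (A *t B) (i*p+k) (j*q+l) = A i j * B k l. *)
From HB Require Import structures.
From mathcomp Require Import all_boot all_order all_algebra.
From mathcomp Require Import mxtens.
Set Implicit Arguments. Unset Strict Implicit. Unset Printing Implicit Defensive.
Import Order.TTheory GRing.Theory Num.Theory.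
Local Open Scope ring_scope.

Section Defs.
Variable F : fieldType.

Definition qnum (q : F) (n : nat) : F := (q ^+ n - q ^- n) / (q - q^-1).

(* index entry test, 1-based: (i,k) is position (a,b) *)
Definition at1 {m n} (i : 'I_m) (k : 'I_n) (a b : nat) : bool :=
  ((i : nat) == a.-1) && ((k : nat) == b.-1).

(* Rhat^(j1,j2) with 2 j1 = m1, 2 j2 = m2: diagonal matrix of size
   (m1+1)(m2+1) with entries q^(2 alpha beta) = (q^(1/2))^(4 alpha beta),
   alpha = j1 - i1, beta = j2 - i2, i.e. 4 alpha beta = (m1 - 2 i1)(m2 - 2 i2). *)
Definition Rhat (qh : F) (m1 m2 : nat) : 'M[F]_(m1.+1 * m2.+1) :=
  \matrix_(i, k)
    if i == k then
      qh ^ ((m1%:Z - (2 * (mxtens_unindex i).1)%N%:Z)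
            * (m2%:Z - (2 * (mxtens_unindex i).2)%N%:Z))
    else 0.

(* E^(j+1/2) with 2j = n: a (4j+2) x (2j+2) matrix.  rt k is the fixed
   square root of [k]_q; ([x]/[y])^(1/2) := rt x / rt y. *)
Definition Emx (q : F) (rt : nat -> F) (n : nat) : 'M[F]_(2 * n.+1, n.+2) :=
  \matrix_(i, k) \sum_(1 <= a < n.+2)
     ((at1 i k a a)%:R * (rt (n.+2 - a)%N / rt n.+1)
      + (at1 i k (a + n.+1)%N a.+1)%:R * (rt a / rt n.+1)).

(* F^(j+1/2) with 2j = n: a (2j+2) x (4j+2) matrix;
   ([x][y])^(1/2) := rt x * rt y. *)
Definition Fmx (q : F) (rt : nat -> F) (n : nat) : 'M[F]_(n.+2, 2 * n.+1) :=
  \matrix_(i, k) \sum_(1 <= a < n.+2)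
     ((at1 i k a a)%:R
        * (rt (n.+2 - a)%N * rt n.+1 / (qnum q (n.+2 - a)%N + qnum q (a - 1)%N))
      + (at1 i k a.+1 (a + n.+1)%N)%:R
        * (rt a * rt n.+1 / (qnum q (n.+1 - a)%N + qnum q a))).

(* Leg notation on F^d1 (x) F^d2 (x) F^d3 (indices associated as (d1*d2)*d3). *)
Definition leg12 (d3 : nat) {m n} (X : 'M[F]_(m, n)) : 'M[F]_(m * d3, n * d3) :=
  X *t (1%:M : 'M[F]_d3).

Definition leg23 (d1 : nat) {d2 d3} (X : 'M[F]_(d2 * d3)) : 'M[F]_(d1 * d2 * d3) :=
  castmx (mulnA d1 d2 d3, mulnA d1 d2 d3) ((1%:M : 'M[F]_d1) *t X).

Definition leg23E (d1 : nat) {c2 c3 m} (Y : 'M[F]_(c2 * c3, m))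
  : 'M[F]_(d1 * c2 * c3, d1 * m) :=
  castmx (mulnA d1 c2 c3, erefl) ((1%:M : 'M[F]_d1) *t Y).

Definition leg23F (d1 : nat) {m c2 c3} (Y : 'M[F]_(m, c2 * c3))
  : 'M[F]_(d1 * m, d1 * c2 * c3) :=
  castmx (erefl, mulnA d1 c2 c3) ((1%:M : 'M[F]_d1) *t Y).

Definition flip23 (d1 d2 d3 : nat) : 'M[F]_(d1 * d2 * d3, d1 * d3 * d2) :=
  \matrix_(u, v)
    (let: (ab, c) := mxtens_unindex u in
     let: (a, b) := mxtens_unindex ab in
     let: (ac, b') := mxtens_unindex v in
     let: (a', c') := mxtens_unindex ac in
     [&& a == a', b == b' & c == c'])%:R.

Definition leg13 (d2 : nat) {d1 d3} (X : 'M[F]_(d1 * d3)) : 'M[F]_(d1 * d2 * d3) :=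
  flip23 d1 d2 d3 *m (X *t (1%:M : 'M[F]_d2)) *m flip23 d1 d3 d2.

End Defs.

(* Main.v *)
Require Import Defs.
From HB Require Import structures.
From mathcomp Require Import all_boot all_order all_algebra.
From mathcomp Require Import mxtens.
From mathcomp Require Import zify ring.
Set Implicit Arguments. Unset Strict Implicit. Unset Printing Implicit Defensive.
Import Order.TTheory GRing.Theory Num.Theory.
Local Open Scope ring_scope.

Section Aux.
Variable F : fieldType.

Lemma sum_pred1 n (x : 'I_n) (g : 'I_n -> F) :
  \sum_(v < n) (v == x)%:R * g v = g x.
Proof.
rewrite (bigD1 x) //= eqxx mul1r big1 ?addr0 // => v /negbTE ->; by rewrite mul0r.
Qed.

Lemma sum_pred1r n (x : 'I_n) (g : 'I_n -> F) :
  \sum_(v < n) g v * (v == x)%:R = g x.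
Proof.
rewrite (bigD1 x) //= eqxx mulr1 big1 ?addr0 // => v /negbTE ->; by rewrite mulr0.
Qed.

Lemma sum_pred1_nat lo hi x (g : nat -> F) :
  \sum_(lo <= a < hi) (a == x)%:R * g a = (lo <= x < hi)%N%:R * g x.
Proof.
case: (boolP (lo <= x < hi)%N) => h.
  rewrite (big_cat_nat _ (n := x)) //=; last by case/andP: h => _ /ltnW.
  rewrite big1_seq ?add0r; last first.
    move=> a /andP [_]; rewrite mem_index_iota => /andP [_ ha].
    by rewrite (_ : (a == x) = false) ?mul0r //; apply/negbTE; rewrite neq_ltn ha.
  rewrite big_ltn; last by case/andP: h.
  rewrite eqxx mul1r big1_seq ?addr0 ?mul1r // => a /andP [_].
  rewrite mem_index_iota => /andP [ha _].
  by rewrite (_ : (a == x) = false) ?mul0r //; apply/negbTE; rewrite neq_ltn ha orbT.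
  by case/andP: h.
rewrite mul0r big1_seq // => a /andP [_]; rewrite mem_index_iota => ha.
case: eqP ha h => [-> -> //|]; by rewrite mul0r.
Qed.

Definition mxdiagf {n} (D : 'M[F]_n) (d : 'I_n -> F) := forall u w, D u w = (u == w)%:R * d u.

Lemma diag_mulmx {n p} (D : 'M[F]_n) d (M : 'M[F]_(n,p)) u v :
  mxdiagf D d -> (D *m M) u v = d u * M u v.
Proof.
move=> hD; rewrite mxE (eq_bigr (fun w => (w == u)%:R * (d u * M w v))).
  by rewrite sum_pred1.
by move=> w _; rewrite hD eq_sym mulrA; case: eqP => [->|]; rewrite ?mul0r.
Qed.

Lemma mulmx_diag {n p} (D : 'M[F]_p) d (M : 'M[F]_(n,p)) u v :
  mxdiagf D d -> (M *m D) u v = M u v * d v.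
Proof.
move=> hD; rewrite mxE (eq_bigr (fun w => (M u w * d v) * (w == v)%:R)).
  by rewrite sum_pred1r.
by move=> w _; rewrite hD; case: eqP => [->|]; rewrite ?mul0r ?mulr0 ?mul1r ?mulr1.
Qed.

Lemma index_eq m n (a a' : 'I_m) (b b' : 'I_n) :
  (mxtens_index (a, b) == mxtens_index (a', b')) = (a == a') && (b == b').
Proof. by rewrite (inj_eq (can_inj (@mxtens_indexK m n))) xpair_eqE. Qed.

Lemma tens1 m n : (1%:M : 'M[F]_m) *t (1%:M : 'M[F]_n) = 1%:M.
Proof.
apply/matrixP => i j; case: (mxtens_indexP i) => a b; case: (mxtens_indexP j) => a' b'.
by rewrite tensmxE !mxE index_eq -natrM mulnb.
Qed.

Lemma castmx_mulmx_cancel m n n' p (e : n = n') (A : 'M[F]_(m,n)) (B : 'M[F]_(n,p)) :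
  castmx (erefl, e) A *m castmx (e, erefl) B = A *m B.
Proof. by case: n' / e. Qed.


Definition sflip d1 d2 d3 (u : 'I_(d1*d2*d3)) : 'I_(d1*d3*d2) :=
  mxtens_index (mxtens_index ((mxtens_unindex (mxtens_unindex u).1).1, (mxtens_unindex u).2),
                (mxtens_unindex (mxtens_unindex u).1).2).

Lemma sflipE d1 d2 d3 (a : 'I_d1) (b : 'I_d2) (c : 'I_d3) :
  sflip (mxtens_index (mxtens_index (a, b), c)) = mxtens_index (mxtens_index (a, c), b).
Proof. by rewrite /sflip !mxtens_indexK. Qed.

Lemma flip23E d1 d2 d3 u v : flip23 F d1 d2 d3 u v = (v == sflip u)%:R.
Proof.
case: (mxtens_indexP u) => ab c; case: (mxtens_indexP ab) => a b.
case: (mxtens_indexP v) => ac b'; case: (mxtens_indexP ac) => a' c'.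
rewrite mxE sflipE !mxtens_indexK /= !index_eq.
by rewrite (eq_sym a') (eq_sym c') (eq_sym b'); case: (a == a'); case: (b == b'); case: (c == c').
Qed.

Lemma flip23E' d1 d2 d3 v w : flip23 F d1 d3 d2 v w = (v == sflip w)%:R.
Proof.
case: (mxtens_indexP w) => ab c; case: (mxtens_indexP ab) => a b.
case: (mxtens_indexP v) => ac b'; case: (mxtens_indexP ac) => a' c'.
rewrite mxE sflipE !mxtens_indexK /= !index_eq.
by rewrite andbA.
Qed.

Lemma leg13_diag d1 d2 d3 (X : 'M[F]_(d1*d3)) f : mxdiagf X f ->
  mxdiagf (leg13 d2 X) (fun u => f (mxtens_index ((mxtens_unindex (mxtens_unindex u).1).1, (mxtens_unindex u).2))).
Proof.
move=> hX u w; rewrite /leg13 mxE.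
rewrite (eq_bigr (fun v => (flip23 F d1 d2 d3 *m (X *t 1%:M)) u v * (v == sflip w)%:R)); last first.
  by move=> v _; rewrite flip23E'.
rewrite sum_pred1r mxE (eq_bigr (fun v => (v == sflip u)%:R * (X *t 1%:M) v (sflip w))); last first.
  by move=> v _; rewrite flip23E.
rewrite sum_pred1.
case: (mxtens_indexP u) => ab c; case: (mxtens_indexP ab) => a b.
case: (mxtens_indexP w) => ab' c'; case: (mxtens_indexP ab') => a' b'.
rewrite !sflipE tensmxE hX !mxE !mxtens_indexK /= !index_eq.
by case: (a == a'); case: (b == b'); case: (c == c'); rewrite ?mulr1 ?mulr0 ?mul0r ?mul1r.
Qed.

Lemma leg12_diag d1 d2 d3 (X : 'M[F]_(d1*d2)) f : mxdiagf X f ->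
  mxdiagf (leg12 d3 X) (fun u => f (mxtens_unindex u).1).
Proof.
move=> hX u w; rewrite /leg12.
case: (mxtens_indexP u) => ab c; case: (mxtens_indexP w) => ab' c'.
rewrite tensmxE hX !mxE !mxtens_indexK /= !index_eq.
by case: (ab == ab'); case: (c == c'); rewrite ?mulr1 ?mulr0 ?mul0r ?mul1r.
Qed.

Lemma cast_index d1 d2 d3 (a : 'I_d1) (b : 'I_d2) (c : 'I_d3) :
  cast_ord (esym (mulnA d1 d2 d3)) (mxtens_index (mxtens_index (a, b), c))
  = mxtens_index (a, mxtens_index (b, c)).
Proof. apply: val_inj => /=. rewrite mulnDl -mulnA addnA. done. Qed.

Lemma leg23_diag d1 d2 d3 (X : 'M[F]_(d2*d3)) f : mxdiagf X f ->
  mxdiagf (leg23 d1 X) (fun u => f (mxtens_index ((mxtens_unindex (mxtens_unindex u).1).2, (mxtens_unindex u).2))).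
Proof.
move=> hX u w; rewrite /leg23 castmxE.
case: (mxtens_indexP u) => ab c; case: (mxtens_indexP ab) => a b.
case: (mxtens_indexP w) => ab' c'; case: (mxtens_indexP ab') => a' b'.
rewrite !cast_index tensmxE hX !mxE !mxtens_indexK /= !index_eq.
by case: (a == a'); case: (b == b'); case: (c == c'); rewrite ?mulr1 ?mulr0 ?mul0r ?mul1r.
Qed.

Lemma Rhat_diag qh m1 m2 : mxdiagf (Rhat qh m1 m2)
  (fun i => qh ^ ((m1%:Z - (2 * (mxtens_unindex i).1)%N%:Z) * (m2%:Z - (2 * (mxtens_unindex i).2)%N%:Z))).
Proof. by move=> u w; rewrite mxE; case: eqP => [->|]; rewrite ?mul1r ?mul0r. Qed.


Lemma EmxE (q : F) rt n (i : 'I_(2 * n.+1)) (k : 'I_n.+2) :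
  Emx q rt n i k = (((i : nat) == k) && (k < n.+1)%N)%:R * (rt (n.+1 - k)%N / rt n.+1)
                 + (((i : nat) == k + n)%N && (0 < k)%N)%:R * (rt k / rt n.+1).
Proof.
rewrite mxE big_split /=; congr (_ + _).
  rewrite (eq_big_nat _ _ (F2 := fun a => (a == k.+1)%:R * (((i:nat) == k)%:R * (rt (n.+2 - a)%N / rt n.+1)))); last first.
    move=> [|a] //= _; rewrite /at1 /= eqSS !mulrA -natrM mulnb; congr (_%:R * _ * _).
    apply: congr1; by apply/idP/idP => /andP [/eqP -> /eqP ->]; rewrite !eqxx.
  by rewrite sum_pred1_nat ltnS subSS mulrA -natrM mulnb andbC.
rewrite (eq_big_nat _ _ (F2 := fun a => (a == k)%:R * (((i:nat) == k + n)%N%:R * (rt a / rt n.+1)))); last first.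
  move=> a /andP [a1 _]; rewrite /at1 /= addnS /= [RHS]mulrA -natrM mulnb; congr (_%:R * _).
  apply: congr1; by apply/idP/idP => /andP [/eqP -> /eqP ->]; rewrite !eqxx.
rewrite sum_pred1_nat ltn_ord andbT mulrA -natrM mulnb andbC.
by case: (0 < k)%N; rewrite ?andbF ?andbT ?mul0r //.
Qed.

Lemma FmxE (q : F) rt n (i : 'I_n.+2) (k : 'I_(2 * n.+1)) :
  Fmx q rt n i k = (((k : nat) == i) && (i < n.+1)%N)%:R
                     * (rt (n.+1 - i)%N * rt n.+1 / (qnum q (n.+1 - i)%N + qnum q i))
                 + (((k : nat) == i + n)%N && (0 < i)%N)%:R
                     * (rt i * rt n.+1 / (qnum q (n.+1 - i)%N + qnum q i)).
Proof.
rewrite mxE big_split /=; congr (_ + _).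
  rewrite (eq_big_nat _ _ (F2 := fun a => (a == i.+1)%:R * (((k:nat) == i)%:R * (rt (n.+2 - a)%N * rt n.+1 / (qnum q (n.+2 - a)%N + qnum q (a - 1)%N))))); last first.
    move=> [|a] //= _; rewrite /at1 /= eqSS !mulrA -natrM mulnb; congr (_%:R * _ * _ * _).
    apply: congr1; by apply/idP/idP => /andP [/eqP -> /eqP ->]; rewrite !eqxx.
  by rewrite sum_pred1_nat ltnS subSS subn1 /= mulrA -natrM mulnb andbC.
rewrite (eq_big_nat _ _ (F2 := fun a => (a == i)%:R * (((k:nat) == i + n)%N%:R * (rt a * rt n.+1 / (qnum q (n.+1 - a)%N + qnum q a))))); last first.
  move=> a /andP [a1 _]; rewrite /at1 /= addnS /= [RHS]mulrA -natrM mulnb; congr (_%:R * _).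
  apply: congr1; by apply/idP/idP => /andP [/eqP -> /eqP ->]; rewrite !eqxx.
rewrite sum_pred1_nat ltn_ord andbT mulrA -natrM mulnb andbC.
by case: (0 < i)%N; rewrite ?andbF ?andbT ?mul0r //.
Qed.


Lemma FE1 (q : F) rt n (hn : (0 < n)%N) (hrt : forall k, rt k ^+ 2 = qnum q k)
  (hq0 : qnum q 0 = 0)
  (hD : forall i, (i <= n.+1)%N -> qnum q (n.+1 - i) + qnum q i != 0) :
  Fmx q rt n *m Emx q rt n = 1%:M.
Proof.
have hr : rt n.+1 != 0.
  apply/eqP => h; move: (hD 0%N isT); by rewrite subn0 hq0 addr0 -hrt h expr2 mul0r eqxx.
pose f1 (i : nat) := rt (n.+1 - i)%N * rt n.+1 / (qnum q (n.+1 - i)%N + qnum q i).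
pose f2 (i : nat) := rt i * rt n.+1 / (qnum q (n.+1 - i)%N + qnum q i).
pose e1 (k : nat) := rt (n.+1 - k)%N / rt n.+1.
pose e2 (k : nat) := rt k / rt n.+1.
pose Fn (i m : nat) := ((m == i) && (i < n.+1)%N)%:R * f1 i + ((m == i + n)%N && (0 < i)%N)%:R * f2 i.
pose En (m k : nat) := ((m == k) && (k < n.+1)%N)%:R * e1 k + ((m == k + n)%N && (0 < k)%N)%:R * e2 k.
apply/matrixP => i k; rewrite mxE.
rewrite (eq_bigr (fun m : 'I_(2 * n.+1) => Fn i m * En m k)); last first.
  by move=> m _; rewrite FmxE EmxE.
rewrite -(big_mkord xpredT (fun m => Fn i m * En m k)).
rewrite (eq_big_nat _ _ (F2 := fun m => (m == i)%:R * ((i < n.+1)%N%:R * f1 i * En m k)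
     + (m == i + n)%N%:R * ((0 < i)%N%:R * f2 i * En m k))); last first.
  move=> m _; rewrite /Fn mulrDl !mulrA -!natrM !mulnb //.
rewrite big_split /= !sum_pred1_nat.
have hi := ltn_ord i; have hk := ltn_ord k.
rewrite (_ : (0 <= i < 2 * n.+1)%N = true); last by lia.
rewrite (_ : (0 <= i + n < 2 * n.+1)%N = true); last by lia.
rewrite /En !mul1r mxE.
have hDx x : (x <= n.+1)%N -> qnum q (n.+1 - x)%N + qnum q x != 0 := hD x.
have key1 x : (x <= n.+1)%N -> f1 x * e1 x = qnum q (n.+1 - x)%N / (qnum q (n.+1 - x)%N + qnum q x).
  move=> hx; rewrite /f1 /e1 -hrt expr2; field; by rewrite -expr2 hrt hDx // hr.
have key2 x : (x <= n.+1)%N -> f2 x * e2 x = qnum q x / (qnum q (n.+1 - x)%N + qnum q x).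
  move=> hx; rewrite /f2 /e2 -(hrt x) expr2; field; by rewrite -expr2 hrt hDx // hr.
rewrite (_ : (i == k) = ((i:nat) == k)) //.
case: (eqVneq (i:nat) k) => [e|ne].
  rewrite -e eqxx /=.
  rewrite (_ : ((i:nat) == i + n)%N = false); last by apply/negbTE; lia.
  rewrite (_ : ((i:nat) + n == i)%N = false); last by apply/negbTE; lia.
  rewrite /= !mul0r !addr0 !add0r.
  have hin : (i <= n.+1)%N by lia.
  case: (ltnP i n.+1) => h1; case: (posnP i) => h2.
  - rewrite /= ?mul1r ?mul0r ?addr0 key1 // h2 subn0 hq0 addr0 divff //.
    by move: (hDx 0%N isT); rewrite subn0 hq0 addr0.
  - rewrite /= ?mul1r key1 // key2 // -mulrDl divff //; exact: hDx.
  - by exfalso; lia.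
  - rewrite /= ?mul1r ?mul0r ?add0r key2 // (_ : (n.+1 - i = 0)%N); last by lia.
    rewrite hq0 add0r divff //; move: (hDx i hin); by rewrite (_ : (n.+1 - i = 0)%N) ?hq0 ?add0r //; lia.
rewrite eqn_add2r (negbTE ne) /= mul0r add0r mul0r addr0.
case: (ltnP i n.+1) => h1.
  rewrite (_ : ((i:nat) == k + n)%N && (0 < k)%N = false); last first.
    by apply/negbTE; apply/negP => /andP [/eqP h3 h4]; lia.
  case: (posnP i) => h2.
    by rewrite /= ?mul0r ?mulr0 ?addr0 ?add0r.
  rewrite (_ : ((i:nat) + n == k)%N && (k < n.+1)%N = false); last first.
    by apply/negbTE; apply/negP => /andP [/eqP h3 h4]; lia.
  by rewrite /= ?mul0r ?mulr0 ?addr0 ?add0r.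
rewrite (_ : ((i:nat) + n == k)%N && (k < n.+1)%N = false); last first.
  by apply/negbTE; apply/negP => /andP [/eqP h3 h4]; lia.
by rewrite /= ?mul0r ?mulr0 ?addr0 ?add0r.
Qed.


Lemma qnum0 (q : F) : qnum q 0 = 0.
Proof. by rewrite /qnum expr0 invr1 subrr mul0r. Qed.

Lemma qnum_sum_neq0 (q : F) (h2 : 2%:R != 0 :> F) (hq0 : q != 0)
  (hroot : forall k : nat, (0 < k)%N -> q ^+ k != 1) a b :
  (0 < a + b)%N -> qnum q a + qnum q b != 0.
Proof.
move=> hab.
have hqq : q * q - 1 != 0 by rewrite subr_eq0 -expr2 hroot.
have hd : q - q^-1 != 0.
  have -> : q - q^-1 = (q * q - 1) / q by field.
  by rewrite mulf_neq0 ?invr_eq0.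
have hx : q ^+ a != 0 by rewrite expf_neq0.
have hy : q ^+ b != 0 by rewrite expf_neq0.
have -> : qnum q a + qnum q b = (q ^+ a + q ^+ b) * (1 - (q ^+ (a + b))^-1) / (q - q^-1).
  rewrite /qnum exprD; field; by rewrite hq0 hqq hx hy.
rewrite !mulf_neq0 ?invr_eq0 //.
  wlog hle : a b hab hx hy / (a <= b)%N.
    move=> W; case: (leqP a b) => h; first exact: W.
    by rewrite addrC; apply: W; rewrite // 1?addnC // ltnW.
  rewrite -(subnKC hle) exprD -{1}(mulr1 (q ^+ a)) -mulrDr mulf_neq0 //.
  case: (posnP (b - a)) => hba.
    by rewrite hba expr0.
  have h2ba : (0 < 2 * (b - a))%N by rewrite muln_gt0 hba.
  apply/eqP => h; move: (hroot _ h2ba).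
  rewrite mulnC exprM.
  have -> : q ^+ (b - a) = -1 by rewrite -(addKr 1 (q ^+ (b - a))) h addr0.
  by rewrite expr2 mulN1r opprK eqxx.
rewrite subr_eq0; apply/eqP => h.
by move: (hroot _ hab); rewrite -[X in X == _]invrK -h invr1 eqxx.
Qed.



Lemma id_mxE n (i j : 'I_n) : (1%:M : 'M[F]_n) i j = (i == j)%:R.
Proof. by rewrite mxE. Qed.

Lemma ind_comm (P : bool) (d r e : F) : (P -> d = r) -> d * (P%:R * e) = (P%:R * e) * r.
Proof. by case: P => [->|_] //; rewrite ?mul1r ?mul0r ?mulr0 // mulrC. Qed.

Lemma inter1 (qh q : F) rt n1 n2 (hqh : qh != 0) :
  (forall u v, (leg13 n1.+1 (Rhat qh 1 n2) *m (leg23 2 (Rhat qh n1 n2) *m leg12 n2.+1 (Emx q rt n1))) u v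
   = (leg12 n2.+1 (Emx q rt n1) *m Rhat qh n1.+1 n2) u v)
  /\ (forall u v, (leg23 2 (Rhat qh n1 n2) *m (leg13 n1.+1 (Rhat qh 1 n2) *m leg12 n2.+1 (Emx q rt n1))) u v
   = (leg12 n2.+1 (Emx q rt n1) *m Rhat qh n1.+1 n2) u v).
Proof.
have h13 := leg13_diag (d2 := n1.+1) (Rhat_diag qh (m1 := 1) (m2 := n2)).
have h23 := leg23_diag (d1 := 2) (Rhat_diag qh (m1 := n1) (m2 := n2)).
suff H : forall u v, (leg13 n1.+1 (Rhat qh 1 n2) *m (leg23 2 (Rhat qh n1 n2) *m leg12 n2.+1 (Emx q rt n1))) u v
   = (leg12 n2.+1 (Emx q rt n1) *m Rhat qh n1.+1 n2) u v.
  split => // u v; rewrite -H (diag_mulmx _ _ _ h23) (diag_mulmx _ _ _ h13) (diag_mulmx _ _ _ h13) (diag_mulmx _ _ _ h23); exact: mulrCA.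
move=> u v; rewrite (diag_mulmx _ _ _ h13) (diag_mulmx _ _ _ h23) (mulmx_diag _ _ _ (Rhat_diag qh (m1 := n1.+1) (m2 := n2))).
case: (mxtens_indexP u) => x c; case: (mxtens_indexP x) => s b.
case: (mxtens_indexP v) => k c'.
rewrite /leg12 tensmxE !mxtens_indexK /= id_mxE.
case: eqP => [<-|ne]; last by rewrite !mulr0 mul0r.
rewrite !mulr1 mulrA -expfzDr // -mulrDl EmxE mulrDr mulrDl.
rewrite [RHS]mulrDl; congr (_ + _); apply: ind_comm => /andP [/eqP h1 h2]; congr (qh ^ _); rewrite -mulrDl; congr (_ * _);
  case: s h1 => [[|[|//]]] /= _ h1; have hb := ltn_ord b; have hk := ltn_ord k; lia.
Qed.


Lemma inter2 (qh q : F) rt n1 n2 (hqh : qh != 0) :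
  (forall u v, (leg12 n2.+1 (Rhat qh n1 1) *m (leg13 2 (Rhat qh n1 n2) *m leg23E n1.+1 (Emx q rt n2))) u v
   = (leg23E n1.+1 (Emx q rt n2) *m Rhat qh n1 n2.+1) u v)
  /\ (forall u v, (leg13 2 (Rhat qh n1 n2) *m (leg12 n2.+1 (Rhat qh n1 1) *m leg23E n1.+1 (Emx q rt n2))) u v
   = (leg23E n1.+1 (Emx q rt n2) *m Rhat qh n1 n2.+1) u v).
Proof.
have h12 := leg12_diag (d3 := n2.+1) (Rhat_diag qh (m1 := n1) (m2 := 1)).
have h13 := leg13_diag (d2 := 2) (Rhat_diag qh (m1 := n1) (m2 := n2)).
suff H : forall u v, (leg12 n2.+1 (Rhat qh n1 1) *m (leg13 2 (Rhat qh n1 n2) *m leg23E n1.+1 (Emx q rt n2))) u v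
   = (leg23E n1.+1 (Emx q rt n2) *m Rhat qh n1 n2.+1) u v.
  split => // u v; rewrite -H (diag_mulmx _ _ _ h12) (diag_mulmx _ _ _ h13) (diag_mulmx _ _ _ h13) (diag_mulmx _ _ _ h12); exact: mulrCA.
move=> u v; rewrite (diag_mulmx _ _ _ h12) (diag_mulmx _ _ _ h13) (mulmx_diag _ _ _ (Rhat_diag qh (m1 := n1) (m2 := n2.+1))).
case: (mxtens_indexP u) => x c; case: (mxtens_indexP x) => a s.
case: (mxtens_indexP v) => a' k.
rewrite /leg23E castmxE cast_index cast_ord_id tensmxE !mxtens_indexK /= id_mxE.
case: eqP => [<-|ne]; last by rewrite !mul0r !mulr0.
rewrite !mul1r mulrA -expfzDr // EmxE [LHS]mulrDr [RHS]mulrDl.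
congr (_ + _); apply: ind_comm => /andP [/eqP h1 h2]; congr (qh ^ _); rewrite -mulrDr; congr (_ * _);
  case: s h1 => [[|[|//]]] /= _ h1; have hc := ltn_ord c; have hk := ltn_ord k; lia.
Qed.

End Aux.

Unset Implicit Arguments.
Set Strict Implicit.

Theorem lemma5p2 (F : fieldType) (q q12 : F) (rt : nat -> F)
  (hchar : [pchar F] =i pred0)
  (hsqrt : forall x : F, exists y : F, y * y = x)
  (hq0 : q != 0)
  (hroot : forall k : nat, (0 < k)%N -> q ^+ k != 1)
  (hq12 : q12 ^+ 2 = q)
  (hrt : forall k : nat, rt k ^+ 2 = qnum q k)
  (n1 n2 : nat) (hn1 : (0 < n1)%N) (hn2 : (0 < n2)%N) :
  [/\ Rhat q12 n1.+1 n2 =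
        leg12 n2.+1 (Fmx q rt n1) *m leg13 n1.+1 (Rhat q12 1 n2)
        *m leg23 2 (Rhat q12 n1 n2) *m leg12 n2.+1 (Emx q rt n1),
      Rhat q12 n1.+1 n2 =
        leg12 n2.+1 (Fmx q rt n1) *m leg23 2 (Rhat q12 n1 n2)
        *m leg13 n1.+1 (Rhat q12 1 n2) *m leg12 n2.+1 (Emx q rt n1),
      Rhat q12 n1 n2.+1 =
        leg23F n1.+1 (Fmx q rt n2) *m leg12 n2.+1 (Rhat q12 n1 1)
        *m leg13 2 (Rhat q12 n1 n2) *m leg23E n1.+1 (Emx q rt n2)
    & Rhat q12 n1 n2.+1 =
        leg23F n1.+1 (Fmx q rt n2) *m leg13 2 (Rhat q12 n1 n2)
        *m leg12 n2.+1 (Rhat q12 n1 1) *m leg23E n1.+1 (Emx q rt n2)].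
Proof.
have hqh : q12 != 0.
  by apply/eqP => h; move: hq0; rewrite -hq12 h expr2 mul0r eqxx.
have h2 : 2%:R != 0 :> F by rewrite ((pcharf0P F).1 hchar 2).
have FE n : (0 < n)%N -> Fmx q rt n *m Emx q rt n = 1%:M.
  move=> hn; apply: FE1 => //; first exact: qnum0.
  move=> i hi; apply: qnum_sum_neq0 => //; lia.
have FE12 n d : (0 < n)%N ->
    leg12 d (Fmx q rt n) *m leg12 d (Emx q rt n) = 1%:M.
  by move=> hn; rewrite /leg12 tensmx_mul FE // mulmx1 tens1.
have FE23 n d : (0 < n)%N ->
    leg23F d (Fmx q rt n) *m leg23E d (Emx q rt n) = 1%:M.
  by move=> hn; rewrite /leg23F /leg23E castmx_mulmx_cancel tensmx_mul FE // mulmx1 tens1.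
have [I1 I2] := inter1 q rt n1 n2 hqh.
have [I3 I4] := inter2 q rt n1 n2 hqh.
have A3 : forall (m1 m2 m3 m4 m5 : nat) (A : 'M[F]_(m1, m2)) (B : 'M[F]_(m2, m3)) (C : 'M[F]_(m3, m4)) (D : 'M[F]_(m4, m5)),
  A *m B *m C *m D = A *m (B *m (C *m D)) by move=> *; rewrite !mulmxA.
split; rewrite A3.
- rewrite (_ : leg13 _ _ *m _ = leg12 n2.+1 (Emx q rt n1) *m Rhat q12 n1.+1 n2); last by apply/matrixP => u v; exact: I1.
  by rewrite mulmxA FE12 // mul1mx.
- rewrite (_ : leg23 _ _ *m _ = leg12 n2.+1 (Emx q rt n1) *m Rhat q12 n1.+1 n2); last by apply/matrixP => u v; exact: I2.
  by rewrite mulmxA FE12 // mul1mx.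
- rewrite (_ : leg12 _ _ *m _ = leg23E n1.+1 (Emx q rt n2) *m Rhat q12 n1 n2.+1); last by apply/matrixP => u v; exact: I3.
  by rewrite mulmxA FE23 // mul1mx.
- rewrite (_ : leg13 _ _ *m _ = leg23E n1.+1 (Emx q rt n2) *m Rhat q12 n1 n2.+1); last by apply/matrixP => u v; exact: I4.
  by rewrite mulmxA FE23 // mul1mx.
Qed.
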